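(* Let $0<t_1<t_2<t_3<t_4$ be real numbers and let $p_i=(t_i,t_i^2,t_i^3)\in\mathbb{R}^3$ for $1\le i\le 4$. Then the unique sphere in $\mathbb{R}^3$ passing through $p_1,\dots,p_4$ has the following property: for every $t\in(0,t_1)\cup(t_2,t_3)\cup(t_4,\infty)$, the point $(t,t^2,t^3)$ lies strictly outside the sphere, i.e., its distance from the center of the sphere is strictly greater than the radius.
   Context: The moment curve in $\mathbb{R}^d$ is the curve $t\mapsto(t,t^2,\dots,t^d)$ for $t>0$. *)

(* Defs.v *)
From Stdlib Require Import Reals.
Open Scope R_scope.

Definition pt3 : Type := (R * R * R)%type.

Definition dist3 (p q : pt3) : R :=
  let '(x1, y1, z1) := p in
  let '(x2, y2, z2) := q in
  sqrt ((x1 - x2) ^ 2 + (y1 - y2) ^ 2 + (z1 - z2) ^ 2).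

Definition moment3 (t : R) : pt3 := (t, t ^ 2, t ^ 3).

Definition on_sphere (c : pt3) (r : R) (p : pt3) : Prop := dist3 c p = r.

(* Main.v *)
Require Import Defs.
From Stdlib Require Import Reals Lra Psatz.
Open Scope R_scope.

Lemma mz (x y : R) : x * y = 0 -> x <> 0 -> y = 0.
Proof. intros H Hx. destruct (Rmult_integral _ _ H); [contradiction|assumption]. Qed.

Lemma cubic0 (t1 t2 t3 t4 q3 q2 q1 q0 : R) :
  t1 < t2 -> t2 < t3 -> t3 < t4 ->
  q3*t1^3+q2*t1^2+q1*t1+q0 = 0 ->
  q3*t2^3+q2*t2^2+q1*t2+q0 = 0 ->
  q3*t3^3+q2*t3^2+q1*t3+q0 = 0 ->
  q3*t4^3+q2*t4^2+q1*t4+q0 = 0 ->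
  q3 = 0 /\ q2 = 0 /\ q1 = 0 /\ q0 = 0.
Proof.
  intros h12 h23 h34 E1 E2 E3 E4.
  assert (A12 : q3*(t1^2+t1*t2+t2^2)+q2*(t1+t2)+q1 = 0).
  { apply (mz (t1 - t2)); [|lra].
    replace ((t1 - t2) * (q3*(t1^2+t1*t2+t2^2)+q2*(t1+t2)+q1)) with
     ((q3*t1^3+q2*t1^2+q1*t1+q0) - (q3*t2^3+q2*t2^2+q1*t2+q0)) by ring. lra. }
  assert (A13 : q3*(t1^2+t1*t3+t3^2)+q2*(t1+t3)+q1 = 0).
  { apply (mz (t1 - t3)); [|lra].
    replace ((t1 - t3) * (q3*(t1^2+t1*t3+t3^2)+q2*(t1+t3)+q1)) with
     ((q3*t1^3+q2*t1^2+q1*t1+q0) - (q3*t3^3+q2*t3^2+q1*t3+q0)) by ring. lra. }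
  assert (A14 : q3*(t1^2+t1*t4+t4^2)+q2*(t1+t4)+q1 = 0).
  { apply (mz (t1 - t4)); [|lra].
    replace ((t1 - t4) * (q3*(t1^2+t1*t4+t4^2)+q2*(t1+t4)+q1)) with
     ((q3*t1^3+q2*t1^2+q1*t1+q0) - (q3*t4^3+q2*t4^2+q1*t4+q0)) by ring. lra. }
  assert (B3 : q3*(t1+t2+t3)+q2 = 0).
  { apply (mz (t2 - t3)); [|lra].
    replace ((t2 - t3) * (q3*(t1+t2+t3)+q2)) with
     ((q3*(t1^2+t1*t2+t2^2)+q2*(t1+t2)+q1) - (q3*(t1^2+t1*t3+t3^2)+q2*(t1+t3)+q1)) by ring. lra. }
  assert (B4 : q3*(t1+t2+t4)+q2 = 0).
  { apply (mz (t2 - t4)); [|lra].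
    replace ((t2 - t4) * (q3*(t1+t2+t4)+q2)) with
     ((q3*(t1^2+t1*t2+t2^2)+q2*(t1+t2)+q1) - (q3*(t1^2+t1*t4+t4^2)+q2*(t1+t4)+q1)) by ring. lra. }
  assert (C : q3 = 0).
  { apply (mz (t3 - t4)); [|lra].
    replace ((t3 - t4) * q3) with ((q3*(t1+t2+t3)+q2) - (q3*(t1+t2+t4)+q2)) by ring. lra. }
  subst q3.
  assert (q2 = 0) by lra. subst q2.
  assert (q1 = 0) by lra. subst q1.
  repeat split; lra.
Qed.

Theorem mainTheorem7 (t1 t2 t3 t4 : R) :
  0 < t1 -> t1 < t2 -> t2 < t3 -> t3 < t4 ->
  exists (c : pt3) (r : R),
    0 < r /\
    on_sphere c r (moment3 t1) /\ on_sphere c r (moment3 t2) /\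
    on_sphere c r (moment3 t3) /\ on_sphere c r (moment3 t4) /\
    (forall (c' : pt3) (r' : R), 0 < r' ->
       on_sphere c' r' (moment3 t1) -> on_sphere c' r' (moment3 t2) ->
       on_sphere c' r' (moment3 t3) -> on_sphere c' r' (moment3 t4) ->
       c' = c /\ r' = r) /\
    (forall t : R,
       (0 < t < t1 \/ t2 < t < t3 \/ t4 < t) ->
       dist3 c (moment3 t) > r).
Proof.
  intros h0 h12 h23 h34.
  set (e1 := t1+t2+t3+t4).
  set (e2 := t1*t2+t1*t3+t1*t4+t2*t3+t2*t4+t3*t4).
  set (e3 := t1*t2*t3+t1*t2*t4+t1*t3*t4+t2*t3*t4).
  set (e4 := t1*t2*t3*t4).
  set (be := 1 + e1^2 - e2).
  set (a := (e3*be - e4*e1)/2).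
  set (b := (1 - e2*be + e3*e1 - e4)/2).
  set (d := (e1*be - e2*e1 + e3)/2).
  set (k := e4*be).
  set (S := a^2+b^2+d^2-k).
  set (D := fun t => (a-t)^2+(b-t^2)^2+(d-t^3)^2).
  assert (KEY : forall t, D t - S = (t-t1)*(t-t2)*(t-t3)*(t-t4)*(t^2+e1*t+be)).
  { intro t. unfold D, S, k, a, b, d, be, e1, e2, e3, e4. cbv beta. field. }
  assert (D1 : D t1 = S) by (pose proof (KEY t1); nra).
  assert (D2 : D t2 = S) by (pose proof (KEY t2); nra).
  assert (D3 : D t3 = S) by (pose proof (KEY t3); nra).
  assert (D4 : D t4 = S) by (pose proof (KEY t4); nra).
  assert (Spos : 0 < S).
  { destruct (Rle_or_lt S 0) as [H|H]; [|exact H]. exfalso.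
    unfold D in D1, D2. cbv beta in D1, D2.
    assert ((a-t1)^2 <= 0).
    { pose proof (pow2_ge_0 (b-t1^2)); pose proof (pow2_ge_0 (d-t1^3)). lra. }
    assert ((a-t2)^2 <= 0).
    { pose proof (pow2_ge_0 (b-t2^2)); pose proof (pow2_ge_0 (d-t2^3)). lra. }
    assert (a - t1 = 0) by nra. assert (a - t2 = 0) by nra. lra. }
  assert (bepos : 0 < be).
  { unfold be, e1, e2. nra. }
  assert (e1pos : 0 < e1) by (unfold e1; lra).
  exists (a, b, d), (sqrt S).
  assert (OS : forall t, D t = S -> on_sphere (a,b,d) (sqrt S) (moment3 t)).
  { intros t Ht. unfold on_sphere, dist3, moment3. unfold D in Ht. cbv beta in Ht.
    f_equal. exact Ht. }
  split; [apply sqrt_lt_R0; exact Spos|].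
  split; [apply OS; exact D1|].
  split; [apply OS; exact D2|].
  split; [apply OS; exact D3|].
  split; [apply OS; exact D4|].
  split.
  - intros [[a' b'] d'] r' hr O1 O2 O3 O4.
    unfold on_sphere, dist3, moment3 in O1, O2, O3, O4.
    assert (G : forall x y z, sqrt (x^2+y^2+z^2) = r' -> x^2+y^2+z^2 = r'^2).
    { intros x y z hs. rewrite <- hs. rewrite pow2_sqrt; [reflexivity|].
      pose proof (pow2_ge_0 x); pose proof (pow2_ge_0 y); pose proof (pow2_ge_0 z). lra. }
    assert (F1 := G _ _ _ O1).
    assert (F2 := G _ _ _ O2).
    assert (F3 := G _ _ _ O3).
    assert (F4 := G _ _ _ O4).
    unfold D in D1, D2, D3, D4. cbv beta in D1, D2, D3, D4.
    destruct (cubic0 t1 t2 t3 t4 (-2*(d'-d)) (-2*(b'-b)) (-2*(a'-a))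
      (a'^2+b'^2+d'^2 - (a^2+b^2+d^2) - r'^2 + S) h12 h23 h34) as [Q3 [Q2 [Q1 Q0]]];
      try nra.
    assert (d' = d) by lra. assert (b' = b) by lra. assert (a' = a) by lra.
    subst a' b' d'. split; [reflexivity|].
    assert (r'^2 = S) by lra.
    rewrite <- H. simpl. rewrite Rmult_1_r. rewrite sqrt_square; lra.
  - intros t Ht.
    assert (Q : 0 < t^2 + e1*t + be).
    { assert (0 < t) by lra. nra. }
    assert (P : 0 < (t-t1)*(t-t2)*((t-t3)*(t-t4))).
    { destruct Ht as [[Ha Hb]|[[Ha Hb]|Ha]].
      - apply Rmult_lt_0_compat; [|nra]. nra.
      - apply Rmult_lt_0_compat; nra.
      - apply Rmult_lt_0_compat; nra. }
    assert (LT : S < D t).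
    { pose proof (KEY t).
      assert (0 < (t-t1)*(t-t2)*((t-t3)*(t-t4))*(t^2+e1*t+be)) by (apply Rmult_lt_0_compat; assumption).
      nra. }
    unfold dist3, moment3. unfold Rgt. apply sqrt_lt_1_alt. split; [lra|]. exact LT.
Qed.
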